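(* Let $k\ge1$ and let $S_1,\dots,S_k\in\mathcal{B}_A(\mathcal{H})$. Then for every positive integer $n$, $$\omega_A^{2n}\Big(\sum_{i=1}^kS_i\Big)\le\frac{k^{2n-1}}{\sqrt2}\sum_{i=1}^k\omega_A\Big(\big(S_i^{\sharp_A}S_i\big)^n+i\,\big(S_iS_i^{\sharp_A}\big)^n\Big),$$ where the $i$ multiplying $\big(S_iS_i^{\sharp_A}\big)^n$ is the imaginary unit.
   Context: $\mathcal{H}$ is a complex Hilbert space with inner product $\langle\cdot,\cdot\rangle$, and $A$ is a fixed nonzero positive bounded operator on $\mathcal{H}$. Set $\langle x,y\rangle_A=\langle Ax,y\rangle$ and $\|x\|_A=\|A^{1/2}x\|$. $\mathcal{B}_A(\mathcal{H})$ is the set of bounded operators $T$ for which there exists a bounded $S$ with $\langle Tx,y\rangle_A=\langle x,Sy\rangle_A$ for all $x,y$ (equivalently $\mathcal{R}(T^*A)\subseteq\mathcal{R}(A)$). For $T\in\mathcal{B}_A(\mathcal{H})$, $T^{\sharp_A}=A^\dagger T^*A$ ($A^\dagger$ the Moore–Penrose inverse) is the reduced solution of $AX=T^*A$. $\omega_A(T)=\sup\{|\langle Tx,x\rangle_A|:\|x\|_A=1\}$. *)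

(* Defs.v *)
From HB Require Import structures.
From mathcomp Require Import all_boot all_order all_algebra.
From mathcomp Require Import boolp classical_sets reals.
From mathcomp Require Import complex.
From Stdlib Require Import ClassicalEpsilon.
Set Implicit Arguments. Unset Strict Implicit. Unset Printing Implicit Defensive.
Import Order.TTheory GRing.Theory Num.Theory.
Local Open Scope ring_scope.
Local Open Scope classical_set_scope.

Record hilbert (R : realType) (V : lmodType R[i]) := Hilbert {
  ip : V -> V -> R[i];
  ipDl : forall x y z, ip (x + y) z = ip x z + ip y z;
  ipZl : forall (a : R[i]) x y, ip (a *: x) y = a * ip x y;
  ip_conj : forall x y, ip y x = ((ip x y)^*)%C;
  ip_ge0 : forall x, 0 <= ip x x;
  ip_eq0 : forall x, ip x x = 0 -> x = 0;
  ip_complete : forall u : nat -> V,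
    (forall e : R, 0 < e -> exists N, forall m n, (N <= m)%N -> (N <= n)%N ->
       Num.sqrt (complex.Re (ip (u m - u n) (u m - u n))) < e) ->
    exists l : V, forall e : R, 0 < e -> exists N, forall n, (N <= n)%N ->
       Num.sqrt (complex.Re (ip (u n - l) (u n - l))) < e
}.

Section Ops.
Variables (R : realType) (V : lmodType R[i]) (HS : hilbert V).

Definition inner (x y : V) : R[i] := ip HS x y.
Definition hnorm (x : V) : R := Num.sqrt (complex.Re (inner x x)).

Definition bounded_op (T : V -> V) : Prop :=
  (forall x y, T (x + y) = T x + T y) /\
  (forall (a : R[i]) x, T (a *: x) = a *: T x) /\
  exists M : R, forall x, hnorm (T x) <= M * hnorm x.

Definition positive_op (A : V -> V) : Prop :=
  bounded_op A /\ forall x, 0 <= inner (A x) x.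

(* semi-inner product <x,y>_A = <Ax,y> and seminorm ||x||_A = ||A^{1/2}x|| = sqrt <Ax,x> *)
Definition innerA (A : V -> V) (x y : V) : R[i] := inner (A x) y.
Definition normA (A : V -> V) (x : V) : R := Num.sqrt (complex.Re (innerA A x x)).

Definition BA (A T : V -> V) : Prop :=
  bounded_op T /\
  exists S, bounded_op S /\ forall x y, innerA A (T x) y = innerA A x (S y).

(* T^{#_A} = A^dagger T^* A, i.e. the reduced solution X of A X = T^* A:
   A X = T^* A  (<=> <A X x, y> = <A x, T y> for all x y), and
   R(X) is contained in N(A)^perp. *)
Definition reduced_sol (A T X : V -> V) : Prop :=
  (forall x y, inner (A (X x)) y = inner (A x) (T y)) /\
  (forall x z, A z = 0 -> inner (X x) z = 0).

Definition sharpA (A T : V -> V) : V -> V :=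
  epsilon (inhabits (fun _ => 0)) (reduced_sol A T).

Definition omegaA (A T : V -> V) : R :=
  sup [set r : R | exists x : V, normA A x = 1 /\
                     r = complex.Re `|innerA A (T x) x| ].

Definition opsum (k : nat) (S : 'I_k -> V -> V) : V -> V :=
  fun x => \sum_(i < k) S i x.
Definition opadd (T U : V -> V) : V -> V := fun x => T x + U x.
Definition opscale (a : R[i]) (T : V -> V) : V -> V := fun x => a *: T x.
Definition opcomp (T U : V -> V) : V -> V := fun x => T (U x).
Definition oppow (T : V -> V) (n : nat) : V -> V := iter n (opcomp T) id.

End Ops.

(* Main.v *)
Require Import Defs.
From HB Require Import structures.
From mathcomp Require Import all_boot all_order all_algebra.
From mathcomp Require Import boolp classical_sets reals.
From mathcomp Require Import complex.
From mathcomp Require Import ring lra.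
From Stdlib Require Import ClassicalEpsilon.
Import Order.TTheory GRing.Theory Num.Theory.
Local Open Scope ring_scope.

Set Implicit Arguments. Unset Strict Implicit. Unset Printing Implicit Defensive.
Notation Rc := complex.Re.
Notation Ic := complex.Im.
Ltac cplx := rewrite /conjc; simpc; apply/eqP; rewrite eq_complex /=; apply/andP; split; apply/eqP; ring.

Section Form.
Variables (R : realType) (V : lmodType R[i]).
Variable f : V -> V -> R[i].
Hypothesis fD : forall x y z, f (x + y) z = f x z + f y z.
Hypothesis fZ : forall a x y, f (a *: x) y = a * f x y.
Hypothesis fC : forall x y, f y x = conjc (f x y).

Lemma conjcD' (a b : R[i]) : conjc (a + b) = conjc a + conjc b.
Proof. by case: a => ? ?; case: b => ? ?; cplx. Qed.
Lemma conjcM' (a b : R[i]) : conjc (a * b) = conjc a * conjc b.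
Proof. by case: a => ? ?; case: b => ? ?; cplx. Qed.
Lemma conjcN' (a : R[i]) : conjc (- a) = - conjc a.
Proof. by case: a => ? ?; cplx. Qed.
Lemma fC' x y : conjc (f x y) = f y x.
Proof. by rewrite fC conjcK. Qed.
Lemma fDr x y z : f x (y + z) = f x y + f x z.
Proof. by rewrite [LHS]fC fD conjcD' !fC'. Qed.
Lemma fZr a x y : f x (a *: y) = conjc a * f x y.
Proof. by rewrite [LHS]fC fZ conjcM' fC'. Qed.
Lemma fNl x y : f (- x) y = - f x y.
Proof. by rewrite -scaleN1r fZ mulN1r. Qed.
Lemma fNr x y : f x (- y) = - f x y.
Proof. by rewrite [LHS]fC fNl conjcN' fC'. Qed.
Lemma fBl x y z : f (x - y) z = f x z - f y z.
Proof. by rewrite fD fNl. Qed.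
Lemma fBr x y z : f x (y - z) = f x y - f x z.
Proof. by rewrite fDr fNr. Qed.
Lemma f0l y : f 0 y = 0.
Proof. by rewrite -(scale0r (0:V)) fZ mul0r. Qed.
Lemma f0r y : f y 0 = 0.
Proof. by rewrite [LHS]fC f0l conjc0. Qed.

Definition msq (c : R[i]) : R := Rc c ^+ 2 + Ic c ^+ 2.

Lemma f_expand x y (t : R) :
  Rc (f (x - (t%:C * f x y)%C *: y) (x - (t%:C * f x y)%C *: y)) =
  Rc (f x x) - 2 * t * msq (f x y) + t ^+ 2 * msq (f x y) * Rc (f y y).
Proof.
rewrite fBl !fBr !fZ !fZr (fC x y).
rewrite /msq; move: (f x y) (f x x) (f y y) => [a b] [p p'] [s s'].
rewrite /conjc; simpc => /=. ring.
Qed.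
End Form.

Lemma sqrt_le_of (R : realType) (a b : R) : 0 <= b -> a <= b ^+ 2 -> Num.sqrt a <= b.
Proof.
move=> b0 ab; apply: le_trans (ler_wsqrtr ab) _.
by rewrite sqrtr_sqr ger0_norm.
Qed.

Section Psd.
Variables (R : realType) (V : lmodType R[i]).
Variable f : V -> V -> R[i].
Hypothesis fD : forall x y z, f (x + y) z = f x z + f y z.
Hypothesis fZ : forall a x y, f (a *: x) y = a * f x y.
Hypothesis fC : forall x y, f y x = conjc (f x y).
Hypothesis fpsd : forall x, 0 <= f x x.

Lemma psd_Re x : 0 <= Rc (f x x).
Proof. by have := fpsd x; rewrite lecE => /andP[_]. Qed.

Lemma f_real x : f x x = (Rc (f x x))%:C%C.
Proof.
have := fpsd x; case: (f x x) => a b; rewrite lecE /= => /andP[/eqP -> _] //.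
Qed.

Lemma msq_ge0 (c : R[i]) : 0 <= msq c.
Proof. by rewrite /msq addr_ge0 // sqr_ge0. Qed.

Lemma CS x y : msq (f x y) <= Rc (f x x) * Rc (f y y).
Proof.
have h t : 0 <= Rc (f x x) - 2 * t * msq (f x y) + t ^+ 2 * msq (f x y) * Rc (f y y).
  by rewrite -(f_expand fD fZ fC); apply: psd_Re.
have m0 := msq_ge0 (f x y); have p0 := psd_Re x; have s0 := psd_Re y.
move: h m0 p0 s0; set m := msq _; set p := Rc _; set s := Rc _ => h m0 p0 s0.
have [s_pos | s_le0] := ltrP 0 s.
  have hu := h s^-1; have su : s * s^-1 = 1 by rewrite mulfV // gt_eqF.
  move: hu su; set u := s^-1 => hu su.
  have e : s * (p - 2 * u * m + u ^+ 2 * m * s) = p * s - m.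
    have -> : s * (p - 2 * u * m + u ^+ 2 * m * s) = p * s - 2 * (s * u) * m + (s * u) ^+ 2 * m by ring.
    by rewrite su; ring.
  have := mulr_ge0 (ltW s_pos) hu; rewrite e; lra.
have s_eq0 : s = 0 by apply: le_anti; rewrite s_le0 s0.
have [m_pos | m_le0] := ltrP 0 m; last by rewrite s_eq0 mulr0.
have hu := h ((p + 1) / 2 * m^-1); have mu : m * m^-1 = 1 by rewrite mulfV // gt_eqF.
move: hu mu; rewrite s_eq0; set u := m^-1 => hu mu.
have e : p - 2 * ((p + 1) / 2 * u) * m + ((p + 1) / 2 * u) ^+ 2 * m * 0 = p - (p + 1) * (m * u).
  by field.
by move: hu; rewrite e mu; lra.
Qed.


Definition qn x := Num.sqrt (Rc (f x x)).

Lemma Re_f_le x y : Rc (f x y) <= qn x * qn y.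
Proof.
rewrite /qn -sqrtrM ?psd_Re //.
have [c_le0 | c_pos] := lerP (Rc (f x y)) 0.
  by apply: le_trans c_le0 (sqrtr_ge0 _).
have -> : Rc (f x y) = Num.sqrt (Rc (f x y) ^+ 2) by rewrite sqrtr_sqr ger0_norm // ltW.
rewrite ler_sqrt ?mulr_ge0 ?psd_Re //.
have := CS x y; rewrite /msq.
have := sqr_ge0 (Ic (f x y)). lra.
Qed.

Lemma qn_ge0 x : 0 <= qn x.
Proof. exact: sqrtr_ge0. Qed.

Lemma qn_sqr x : qn x ^+ 2 = Rc (f x x).
Proof. by rewrite /qn sqr_sqrtr // psd_Re. Qed.

Lemma Re_fC x y : Rc (f y x) = Rc (f x y).
Proof. by rewrite fC; case: (f x y). Qed.

Lemma Re_fDD x y : Rc (f (x + y) (x + y)) = Rc (f x x) + 2 * Rc (f x y) + Rc (f y y).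
Proof.
rewrite fD !(fDr fD fC) !raddfD /= (Re_fC y x); ring.
Qed.

Lemma qn_tri x y : qn (x + y) <= qn x + qn y.
Proof.
apply: sqrt_le_of; first by rewrite addr_ge0 ?qn_ge0.
rewrite Re_fDD sqrrD !qn_sqr.
have := Re_f_le x y; lra.
Qed.

Lemma qn0_f x w : qn x = 0 -> f x w = 0.
Proof.
move=> h; have := CS x w; rewrite -qn_sqr h expr0n /= mul0r.
case: (f x w) => a b; rewrite /msq /= => hab.
have ha : a ^+ 2 = 0 by apply: le_anti; rewrite sqr_ge0 andbT; have := sqr_ge0 b; lra.
have hb : b ^+ 2 = 0 by apply: le_anti; rewrite sqr_ge0 andbT; have := sqr_ge0 a; lra.
by move: ha hb => /eqP; rewrite sqrf_eq0 => /eqP -> /eqP; rewrite sqrf_eq0 => /eqP ->.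
Qed.

End Psd.

Section Polar.
Variables (R : realType) (V : lmodType R[i]).
Variables f1 f2 : V -> V -> R[i].
Hypothesis f1D : forall x y z, f1 (x + y) z = f1 x z + f1 y z.
Hypothesis f1Dr : forall x y z, f1 x (y + z) = f1 x y + f1 x z.
Hypothesis f1Z : forall a x y, f1 (a *: x) y = a * f1 x y.
Hypothesis f1Zr : forall a x y, f1 x (a *: y) = conjc a * f1 x y.
Hypothesis f2D : forall x y z, f2 (x + y) z = f2 x z + f2 y z.
Hypothesis f2Dr : forall x y z, f2 x (y + z) = f2 x y + f2 x z.
Hypothesis f2Z : forall a x y, f2 (a *: x) y = a * f2 x y.
Hypothesis f2Zr : forall a x y, f2 x (a *: y) = conjc a * f2 x y.
Hypothesis fdiag : forall x, f1 x x = f2 x x.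

Lemma polar x y : f1 x y = f2 x y.
Proof.
have E1 := fdiag (x + y).
have E2 := fdiag (x + 'i%C *: y).
rewrite f1D f2D !f1Dr !f2Dr (fdiag x) (fdiag y) in E1.
rewrite f1D f2D !f1Dr !f2Dr !f1Z !f2Z !f1Zr !f2Zr (fdiag x) (fdiag y) in E2.
move: E1 E2; rewrite /conjc.
move: (f1 x y) (f1 y x) (f2 x y) (f2 y x) (f2 x x) (f2 y y) => [a1 a2] [b1 b2] [c1 c2] [d1 d2] [p1 p2] [q1 q2].
simpc => /eqP; rewrite eq_complex /= => /andP[/eqP e1 /eqP e2] /eqP.
rewrite eq_complex /= => /andP[/eqP e3 /eqP e4].
apply/eqP; rewrite eq_complex /=; apply/andP; split; apply/eqP; lra.
Qed.
End Polar.


Section Reals.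
Variable R : realType.

Lemma logconv (a : nat -> R) : (forall j, 0 <= a j) ->
  (forall j, a j.+1 ^+ 2 <= a j * a j.+2) ->
  forall N, a 1%N ^+ N.+1 <= a 0%N ^+ N * a N.+1.
Proof.
move=> a0 h.
have C j : a 1%N * a j <= a 0%N * a j.+1.
  elim: j => [|j IH]; first by rewrite mulrC.
  have [z|pos] := eqVneq (a j.+1) 0; first by rewrite z mulr0 mulr_ge0.
  have pos' : 0 < a j.+1 by rewrite lt_def pos a0.
  rewrite -(ler_pM2r pos').
  have h1 := ler_wpM2l (a0 1%N) (h j).
  have h2 := ler_wpM2r (a0 j.+2) IH.
  have e1 : a 1%N * a j.+1 * a j.+1 = a 1%N * a j.+1 ^+ 2 by ring.
  have e2 : a 0%N * a j.+2 * a j.+1 = a 0%N * a j.+1 * a j.+2 by ring.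
  have e3 : a 1%N * (a j * a j.+2) = a 1%N * a j * a j.+2 by ring.
  rewrite e1 e2; apply: le_trans h1 _; rewrite e3; exact: h2.
elim=> [|N IH]; first by rewrite expr1 expr0 mul1r.
rewrite exprS; apply: le_trans (ler_wpM2l (a0 1%N) IH) _.
have e : a 1%N * (a 0%N ^+ N * a N.+1) = a 0%N ^+ N * (a 1%N * a N.+1) by ring.
rewrite e [a 0%N ^+ N.+1]exprS [a 0%N * _]mulrC -mulrA ler_wpM2l ?exprn_ge0 //.
Qed.

Lemma bernoulli (x : R) N : 0 <= x -> 1 + N%:R * x <= (1 + x) ^+ N.
Proof.
move=> x0; elim: N => [|N IH]; first by rewrite mul0r addr0 expr0.
rewrite exprS; apply: le_trans (_ : (1 + x) * (1 + N%:R * x) <= _); last first.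
  by rewrite ler_wpM2l // addr_ge0.
rewrite -natr1; have : 0 <= N%:R * x * x by rewrite mulr_ge0 // mulr_ge0.
nra.
Qed.

Lemma pow_unbounded (r C : R) : 1 < r -> exists N, C < r ^+ N.
Proof.
move=> r1; set x := r - 1; have x0 : 0 < x by rewrite subr_gt0.
exists (Num.bound (`|C| / x)).
have hb := archi_boundP (divr_ge0 (normr_ge0 C) (ltW x0)).
have := bernoulli (Num.bound (`|C| / x)) (ltW x0).
have -> : 1 + x = r by rewrite /x; ring.
move: hb; set B := (Num.bound _)%:R => hb h.
have : `|C| < B * x by rewrite -ltr_pdivrMr.
have := ler_norm C. lra.
Qed.

Lemma pow_diff (w c : R) m : 0 <= c -> c <= w ->
  w ^+ m.+1 - c ^+ m.+1 <= m.+1%:R * w ^+ m * (w - c).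
Proof.
move=> c0 cw; have w0 : 0 <= w := le_trans c0 cw.
elim: m => [|m IH]; first by rewrite !expr1 expr0 mulr1 mul1r.
have e : w ^+ m.+2 - c ^+ m.+2 = w * (w ^+ m.+1 - c ^+ m.+1) + c ^+ m.+1 * (w - c).
  by rewrite !exprS; ring.
rewrite e.
have h1 := ler_wpM2l w0 IH.
have h2 : c ^+ m.+1 * (w - c) <= w ^+ m.+1 * (w - c).
  by rewrite ler_wpM2r ?subr_ge0 // lerXn2r // nnegrE.
have e2 : m.+2%:R * w ^+ m.+1 * (w - c) = w * (m.+1%:R * w ^+ m * (w - c)) + w ^+ m.+1 * (w - c).
  by rewrite -natr1 -[m.+1%:R]natr1 !exprS; ring.
rewrite e2; exact: lerD.
Qed.


Lemma cheb k (F : 'I_k -> R) p : (forall i, 0 <= F i) ->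
  (\sum_i F i) * (\sum_i F i ^+ p) <= k%:R * \sum_i F i ^+ p.+1.
Proof.
move=> F0.
have H i j : F i * F j ^+ p + F j * F i ^+ p <= F i ^+ p.+1 + F j ^+ p.+1.
  have : 0 <= (F i - F j) * (F i ^+ p - F j ^+ p).
    have [le|le] := lerP (F i) (F j).
      by apply: mulr_le0; rewrite subr_le0 //; apply: lerXn2r; rewrite ?nnegrE.
    apply: mulr_ge0; first by rewrite subr_ge0 ltW.
    by rewrite subr_ge0; apply: lerXn2r; rewrite ?nnegrE // ltW.
  rewrite !exprS; lra.
have HH : \sum_(i < k) \sum_(j < k) (F i * F j ^+ p + F j * F i ^+ p) <=
    \sum_(i < k) \sum_(j < k) (F i ^+ p.+1 + F j ^+ p.+1).
  by apply: ler_sum => i _; apply: ler_sum => j _; exact: H.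
have L : \sum_(i < k) \sum_(j < k) (F i * F j ^+ p + F j * F i ^+ p) =
   (\sum_i F i) * (\sum_i F i ^+ p) *+ 2.
  under eq_bigr do rewrite big_split /=.
  rewrite big_split /= [X in _ + X = _]exchange_big /= big_distrlr /=.
  by rewrite mulr2n.
have Rr : \sum_(i < k) \sum_(j < k) (F i ^+ p.+1 + F j ^+ p.+1) =
   (k%:R * \sum_i F i ^+ p.+1) *+ 2.
  under eq_bigr do rewrite big_split /=.
  rewrite big_split /= [X in _ + X = _]exchange_big /=.
  under eq_bigr do rewrite sumr_const card_ord.
  by rewrite sumrMnl mulr_natl mulr2n.
by move: HH; rewrite L Rr ler_pMn2r.
Qed.

Lemma power_mean k (F : 'I_k -> R) m : (forall i, 0 <= F i) ->
  (\sum_i F i) ^+ m.+1 <= (k ^ m)%:R * \sum_i F i ^+ m.+1.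
Proof.
move=> F0; elim: m => [|m IH]; first by rewrite expn0 mul1r !expr1.
rewrite exprS.
have S0 : 0 <= \sum_i F i by apply: sumr_ge0.
apply: le_trans (ler_wpM2l S0 IH) _.
rewrite mulrCA expnS natrM [k%:R * _]mulrC -mulrA ler_wpM2l //.
exact: cheb.
Qed.

End Reals.


Section Main.
Variables (R : realType) (V : lmodType R[i]) (HS : hilbert V) (A : V -> V).
Hypothesis hA : positive_op HS A.

Let ipf := ip HS.
Let ipD : forall x y z, ipf (x + y) z = ipf x z + ipf y z := ipDl HS.
Let ipZ : forall a x y, ipf (a *: x) y = a * ipf x y := ipZl HS.
Let ipC : forall x y, ipf y x = conjc (ipf x y) := ip_conj HS.
Let ipP : forall x, 0 <= ipf x x := ip_ge0 HS.

Lemma AD x y : A (x + y) = A x + A y. Proof. by case: hA => [[h _] _]; apply: h. Qed.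
Lemma AZ a x : A (a *: x) = a *: A x. Proof. case: hA => [[_ [h _]] _]. exact: (h a x). Qed.
Lemma A0 : A 0 = 0. Proof. by apply: (addrI (A 0)); rewrite addr0 -AD addr0. Qed.
Lemma AN x : A (- x) = - A x. Proof. by rewrite -scaleN1r AZ scaleN1r. Qed.
Lemma AB x y : A (x - y) = A x - A y. Proof. by rewrite AD AN. Qed.

Definition g x y := ipf (A x) y.
Lemma gD x y z : g (x + y) z = g x z + g y z. Proof. by rewrite /g AD ipD. Qed.
Lemma gZ a x y : g (a *: x) y = a * g x y. Proof. by rewrite /g AZ ipZ. Qed.
Lemma gDr x y z : g x (y + z) = g x y + g x z. Proof. exact: (fDr ipD ipC). Qed.
Lemma gZr a x y : g x (a *: y) = conjc a * g x y. Proof. exact: (fZr ipZ ipC). Qed.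
Lemma gP x : 0 <= g x x. Proof. by case: hA => _ h; apply: h. Qed.

Lemma gC x y : g y x = conjc (g x y).
Proof.
pose f2 := fun x y => conjc (g y x).
suff : g y x = f2 y x by [].
apply: (@polar _ _ g f2 gD gDr gZ gZr) => //.
- by move=> ? ? ?; rewrite /f2 gDr conjcD'.
- by move=> ? ? ?; rewrite /f2 gD conjcD'.
- by move=> ? ? ?; rewrite /f2 gZr conjcM' conjcK.
- by move=> ? ? ?; rewrite /f2 gZ conjcM'.
- move=> z; rewrite /f2; have := gP z; case: (g z z) => a b.
  rewrite lecE /= => /andP[/eqP hb _]; have b0 : b = 0 by rewrite hb.
  by rewrite b0 /conjc oppr0.
Qed.

Lemma g_real x : g x x = (Rc (g x x))%:C%C. Proof. exact: f_real gP x. Qed.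
Lemma g_Re_ge0 x : 0 <= Rc (g x x). Proof. exact: psd_Re gP x. Qed.
Lemma g_CS x y : msq (g x y) <= Rc (g x x) * Rc (g y y). Proof. exact: CS gD gZ gC gP x y. Qed.
Lemma g_Re_le x y : Rc (g x y) <= qn g x * qn g y. Proof. exact: Re_f_le gD gZ gC gP x y. Qed.
Lemma g_sqr x : qn g x ^+ 2 = Rc (g x x). Proof. exact: qn_sqr gP x. Qed.
Lemma ip_Re_le x y : Rc (ipf x y) <= qn ipf x * qn ipf y. Proof. exact: Re_f_le ipD ipZ ipC ipP x y. Qed.
Lemma ip_sqr x : qn ipf x ^+ 2 = Rc (ipf x x). Proof. exact: qn_sqr ipP x. Qed.

Lemma kerA z : qn g z = 0 -> A z = 0.
Proof.
move=> h; have := qn0_f gD gZ gC gP (A z) h.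
by rewrite /g => /ip_eq0.
Qed.

Lemma adj_swap (U W : V -> V) : (forall x y, g (U x) y = g x (W y)) ->
  forall x y, g (W x) y = g x (U y).
Proof. by move=> h x y; rewrite gC -h -gC. Qed.

Lemma MA_ex : exists MA : R, 0 <= MA /\ forall w, qn g w ^+ 2 <= MA * qn ipf w ^+ 2.
Proof.
case: hA => [[_ [_ [MA hMA]]] _]; exists (Num.max MA 0); split; first by rewrite le_max lexx orbT.
move=> w; rewrite g_sqr; apply: le_trans (ip_Re_le (A w) w) _.
apply: le_trans (_ : MA * qn ipf w ^+ 2 <= _); last first.
  by rewrite ler_wpM2r ?sqr_ge0 // le_max lexx.
rewrite expr2 mulrA ler_wpM2r ?qn_ge0 //; exact: hMA.
Qed.

Lemma sa_bound (B : V -> V) (M : R) : 0 < M ->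
  (forall x, qn ipf (B x) <= M * qn ipf x) ->
  (forall u v, g (B u) v = g u (B v)) ->
  forall x, qn g (B x) <= M * qn g x.
Proof.
move=> M0 hB sa x.
pose a j := qn g (iter j B x).
have a0 j : 0 <= a j by exact: qn_ge0.
have lc : forall j, a j.+1 ^+ 2 <= a j * a j.+2.
  move=> j; rewrite /a g_sqr.
  have -> : g (iter j.+1 B x) (iter j.+1 B x) = g (iter j B x) (iter j.+2 B x) by rewrite /= sa.
  exact: g_Re_le.
have LC := logconv a0 lc.
have [MA [MA0 hMA]] := MA_ex.
set h := qn ipf x.
have hj j : qn ipf (iter j B x) <= M ^+ j * h.
  elim: j => [|j IH]; first by rewrite expr0 mul1r.
  by rewrite /= exprS -mulrA; apply: le_trans (hB _) _; rewrite ler_pM2l.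
have aN j : a j ^+ 2 <= MA * (M ^+ j * h) ^+ 2.
  apply: le_trans (hMA _) _.
  apply: ler_wpM2l => //; apply: lerXn2r; rewrite ?nnegrE; [exact: qn_ge0| |exact: hj].
  by apply: mulr_ge0; [apply: exprn_ge0; exact: ltW | exact: qn_ge0].
change (a 1%N <= M * a 0%N).
have [z|pos] := eqVneq (a 0%N) 0.
  have := lc 0%N; rewrite z mul0r => h1.
  have : a 1%N ^+ 2 = 0 by apply: le_anti; rewrite h1 sqr_ge0.
  by move/eqP; rewrite sqrf_eq0 mulr0 => /eqP ->.
have p0 : 0 < a 0%N by rewrite lt_def pos a0.
rewrite leNgt; apply/negP => gt.
set r := a 1%N / (M * a 0%N).
have Ma0 : 0 < M * a 0%N by rewrite mulr_gt0.
have r1 : 1 < r by rewrite /r ltr_pdivlMr // mul1r.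
have ar : a 1%N = r * M * a 0%N by rewrite /r -mulrA divfK // gt_eqF.
have aS j : a j <= Num.sqrt MA * (M ^+ j * h).
  have hh : 0 <= M ^+ j * h.
    by apply: mulr_ge0; [apply: exprn_ge0; exact: ltW | exact: qn_ge0].
  have e1 : a j = Num.sqrt (a j ^+ 2) by rewrite sqrtr_sqr ger0_norm.
  have e2 : Num.sqrt MA * (M ^+ j * h) = Num.sqrt (MA * (M ^+ j * h) ^+ 2).
    by rewrite sqrtrM // sqrtr_sqr ger0_norm.
  rewrite e1 e2; exact: ler_wsqrtr (aN j).
have [N HN] := pow_unbounded (Num.sqrt MA * h / a 0%N) r1.
have LCN := LC N.
have Kp : 0 < M ^+ N.+1 * a 0%N ^+ N by rewrite mulr_gt0 // exprn_gt0.
have H : r ^+ N.+1 * a 0%N * (M ^+ N.+1 * a 0%N ^+ N) <=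
         Num.sqrt MA * h * (M ^+ N.+1 * a 0%N ^+ N).
  have e : a 1%N ^+ N.+1 = r ^+ N.+1 * a 0%N * (M ^+ N.+1 * a 0%N ^+ N).
    by rewrite ar !exprMn [a 0%N ^+ N.+1]exprSr; ring.
  rewrite -e; apply: le_trans LCN _.
  have e2 : Num.sqrt MA * h * (M ^+ N.+1 * a 0%N ^+ N) =
            a 0%N ^+ N * (Num.sqrt MA * (M ^+ N.+1 * h)) by ring.
  by rewrite e2 ler_wpM2l ?exprn_ge0.
move: H; rewrite ler_pM2r // => H.
move: HN; rewrite ltr_pdivrMr // => HN.
have r0 : 0 < r := lt_trans ltr01 r1.
have h1 : 0 <= r ^+ N * (r - 1).
  by apply: mulr_ge0; [exact: exprn_ge0 (ltW r0) | rewrite subr_ge0 ltW].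
have h2 : r ^+ N <= r ^+ N.+1 by move: h1; rewrite exprS; lra.
have := ler_wpM2r (ltW p0) h2. lra.
Qed.



Lemma bnd_pos (T : V -> V) : bounded_op HS T ->
  exists M : R, 0 < M /\ forall x, qn ipf (T x) <= M * qn ipf x.
Proof.
case=> _ [_ [M hM]]; exists (`|M| + 1); split; first by rewrite ltr_pwDr // normr_ge0.
move=> x; apply: le_trans (hM x) _; rewrite ler_wpM2r ?qn_ge0 //.
by have := ler_norm M; lra.
Qed.

Lemma BA_bound (T : V -> V) : BA HS A T ->
  exists c : R, 0 <= c /\ forall x, qn g (T x) <= c * qn g x.
Proof.
case=> bT [S [bS hTS]].
have hTS' : forall x y, g (T x) y = g x (S y) by exact: hTS.
have [MT [MT0 hMT]] := bnd_pos bT; have [MS [MS0 hMS]] := bnd_pos bS.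
have sa : forall u v, g (S (T u)) v = g u (S (T v)).
  by move=> u v; rewrite (adj_swap hTS') hTS'.
have hB : forall x, qn ipf (S (T x)) <= MS * MT * qn ipf x.
  by move=> x; apply: le_trans (hMS _) _; rewrite -mulrA ler_pM2l.
have := sa_bound (mulr_gt0 MS0 MT0) hB sa => hb.
exists (Num.sqrt (MS * MT)); split; first exact: sqrtr_ge0.
move=> x; apply: sqrt_le_of; first by rewrite mulr_ge0 ?sqrtr_ge0 ?qn_ge0.
rewrite exprMn (sqr_sqrtr (ltW (mulr_gt0 MS0 MT0))) hTS'.
apply: le_trans (g_Re_le _ _) _.
rewrite (_ : MS * MT * qn g x ^+ 2 = qn g x * (MS * MT * qn g x)); last by rewrite expr2; ring.
by apply: ler_wpM2l; [exact: qn_ge0 | exact: hb].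
Qed.


Section McC.
Variable P : V -> V.
Hypothesis Psa : forall u v, g (P u) v = g u (P v).
Hypothesis Ppsd : forall u, 0 <= g (P u) u.

Lemma oppowS j u : oppow P j.+1 u = P (oppow P j u). Proof. by []. Qed.

Lemma oppow_comm j u : oppow P j (P u) = P (oppow P j u).
Proof. by elim: j => [|j IH] //=; rewrite /opcomp -/(oppow P j) IH. Qed.

Lemma oppowD i k u : oppow P (i + k) u = oppow P i (oppow P k u).
Proof. by elim: i => [|i IH] //=; rewrite /opcomp -/(oppow P (i + k)) -/(oppow P i) IH. Qed.

Lemma pow_sa j u v : g (oppow P j u) v = g u (oppow P j v).
Proof.
elim: j u v => [|j IH] u v //.
by rewrite oppowS Psa IH oppow_comm.
Qed.

Let hf u v := g (P u) v.
Let hD x y z : hf (x + y) z = hf x z + hf y z. Proof. by rewrite /hf !Psa gD. Qed.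
Let hZ a x y : hf (a *: x) y = a * hf x y. Proof. by rewrite /hf !Psa gZ. Qed.
Let hC x y : hf y x = conjc (hf x y). Proof. by rewrite /hf Psa gC. Qed.
Let hP x : 0 <= hf x x. Proof. exact: Ppsd. Qed.

Variable x : V.
Let f j := Rc (g (oppow P j x) x).

Lemma key i k : g (oppow P (i + k) x) x = g (oppow P k x) (oppow P i x).
Proof. by rewrite oppowD pow_sa. Qed.

Lemma key_even c : g (oppow P (c + c) x) x = g (oppow P c x) (oppow P c x).
Proof. exact: key. Qed.

Lemma key_odd c : g (oppow P (c + c).+1 x) x = hf (oppow P c x) (oppow P c x).
Proof. by rewrite -addSn key /hf -Psa. Qed.

Lemma mc_real j : g (oppow P j x) x = (f j)%:C%C.
Proof.
rewrite /f; rewrite -[j]odd_double_half -addnn; case: (odd j) => /=.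
  by rewrite ?add1n key_odd; apply: (f_real hP).
by rewrite ?add0n key_even; apply: g_real.
Qed.

Lemma mc_ge0 j : 0 <= f j.
Proof.
rewrite /f -[j]odd_double_half -addnn; case: (odd j) => /=.
  by rewrite ?add1n key_odd; apply: (psd_Re hP).
by rewrite ?add0n key_even; apply: g_Re_ge0.
Qed.

Lemma sq_le_msq (c : R[i]) : Rc c ^+ 2 <= msq c.
Proof. by rewrite /msq lerDl sqr_ge0. Qed.

Lemma mc_lc j : f j.+1 ^+ 2 <= f j * f j.+2.
Proof.
rewrite -[j]odd_double_half -addnn; move: (j./2) => c; case: (odd j) => /=; rewrite ?add0n /f.
  have -> : ((c + c).+3 = (c.+1 + c.+1).+1)%N by rewrite addSn addnS.
  have -> : ((c + c).+2 = (c.+1 + c.+1))%N by rewrite addSn addnS.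
  rewrite key_odd key_odd key_even oppowS.
  apply: le_trans (sq_le_msq _) _.
  exact: (CS hD hZ hC hP).
have -> : ((c + c).+2 = (c.+1 + c.+1))%N by rewrite addSn addnS.
have -> : ((c + c).+1 = (c.+1 + c))%N by rewrite addSn.
rewrite key key_even key_even.
apply: le_trans (sq_le_msq _) _.
exact: g_CS.
Qed.

Lemma mccarthy N : Rc (g x x) = 1 -> Rc (g (P x) x) ^+ N.+1 <= Rc (g (oppow P N.+1 x) x).
Proof.
move=> h1; have := logconv mc_ge0 mc_lc N.
by rewrite /f /= h1 expr1n mul1r.
Qed.


End McC.


Lemma Rc_norm (c : R[i]) : Rc `|c| = Num.sqrt (msq c).
Proof. by rewrite normc_def. Qed.

Lemma Rc_norm_pq (p q : R) : Rc `|(p%:C + 'i * q%:C)%C| = Num.sqrt (p ^+ 2 + q ^+ 2).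
Proof.
rewrite Rc_norm /msq; congr (Num.sqrt (_ ^+ 2 + _ ^+ 2)) => /=; simpc => //=.
Qed.


Section PerOp.
Variables T X : V -> V.
Hypothesis hT : BA HS A T.
Hypothesis hX : forall x y, g (X x) y = g x (T y).
Let hTX : forall x y, g (T x) y = g x (X y) := adj_swap hX.

Let P := opcomp X T.
Let Q := opcomp T X.
Let Psa u v : g (P u) v = g u (P v). Proof. by rewrite /P /opcomp hX hTX. Qed.
Let Ppsd u : 0 <= g (P u) u. Proof. by rewrite /P /opcomp hX; apply: gP. Qed.
Let Qsa u v : g (Q u) v = g u (Q v). Proof. by rewrite /Q /opcomp hTX hX. Qed.
Let Qpsd u : 0 <= g (Q u) u. Proof. by rewrite /Q /opcomp hTX; apply: gP. Qed.

Lemma X_bound : exists c : R, 0 <= c /\ forall w,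
  qn g (P w) <= c * qn g w /\ qn g (Q w) <= c * qn g w.
Proof.
have [c [c0 hc]] := BA_bound hT.
have hXb w : qn g (X w) <= c * qn g w.
  have h : qn g (X w) ^+ 2 <= qn g w * (c * qn g (X w)).
    rewrite g_sqr hX; apply: le_trans (g_Re_le _ _) _.
    by apply: ler_wpM2l; [exact: qn_ge0 | exact: hc].
  have [z|nz] := eqVneq (qn g (X w)) 0; first by rewrite z mulr_ge0 ?qn_ge0.
  have pos : 0 < qn g (X w) by rewrite lt_def nz qn_ge0.
  rewrite -(ler_pM2r pos); move: h; rewrite expr2; lra.
exists (c * c); split; first exact: mulr_ge0.
move=> w; split.
  by rewrite /P /opcomp -mulrA; apply: le_trans (hXb _) _; rewrite ler_wpM2l // hc.
by rewrite /Q /opcomp -mulrA; apply: le_trans (hc _) _; rewrite ler_wpM2l // hXb.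
Qed.


Variable N : nat.
Let Mop := opadd (oppow P N.+1) (opscale 'i%C (oppow Q N.+1)).

Lemma Mop_val y : g (Mop y) y =
  ((Rc (g (oppow P N.+1 y) y))%:C + 'i * (Rc (g (oppow Q N.+1 y) y))%:C)%C.
Proof.
rewrite /Mop /opadd /opscale gD gZ.
by rewrite (mc_real Psa Ppsd y N.+1) (mc_real Qsa Qpsd y N.+1).
Qed.

Lemma Mop_abs y : Rc `|g (Mop y) y| =
  Num.sqrt (Rc (g (oppow P N.+1 y) y) ^+ 2 + Rc (g (oppow Q N.+1 y) y) ^+ 2).
Proof. by rewrite Mop_val Rc_norm_pq. Qed.

Lemma pow_bound (B : V -> V) (c : R) : 0 <= c -> (forall w, qn g (B w) <= c * qn g w) ->
  forall j w, qn g (oppow B j w) <= c ^+ j * qn g w.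
Proof.
move=> c0 hB; elim=> [|j IH] w; first by rewrite expr0 mul1r.
rewrite oppowS exprS -mulrA; apply: le_trans (hB _) _.
by rewrite ler_wpM2l.
Qed.

Lemma Mop_ub : exists C : R, forall y, qn g y = 1 -> Rc `|g (Mop y) y| <= C.
Proof.
have [c [c0 hc]] := X_bound.
exists ((c ^+ N.+1) *+ 2) => y y1.
rewrite Mop_abs.
set p := Rc _; set q := Rc _.
have p0 : 0 <= p by exact: (mc_ge0 Psa Ppsd y N.+1).
have q0 : 0 <= q by exact: (mc_ge0 Qsa Qpsd y N.+1).
have pb : p <= c ^+ N.+1.
  apply: le_trans (g_Re_le _ _) _; rewrite y1 mulr1.
  have := pow_bound c0 (fun w => (hc w).1) N.+1 y; rewrite y1 mulr1 //.
have qb : q <= c ^+ N.+1.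
  apply: le_trans (g_Re_le _ _) _; rewrite y1 mulr1.
  have := pow_bound c0 (fun w => (hc w).2) N.+1 y; rewrite y1 mulr1 //.
apply: sqrt_le_of; first by rewrite mulrn_wge0 // exprn_ge0.
rewrite mulr2n; nra.
Qed.

Lemma per_op x : qn g x = 1 ->
  Rc `|g (T x) x| ^+ (2 * N.+1) * Num.sqrt 2 <= omegaA HS A Mop.
Proof.
move=> x1.
have gx1 : Rc (g x x) = 1 by rewrite -g_sqr x1 expr1n.
rewrite /omegaA; set E := (X in sup X).
have vE : E (Rc `|g (Mop x) x|) by exists x; split.
have hsE : has_sup E.
  split; first by exists (Rc `|g (Mop x) x|).
  have [C hC] := Mop_ub; exists C => r [y [y1 ->]]; exact: hC.
apply: le_trans (sup_upper_bound hsE vE).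
rewrite Mop_abs.
set p := Rc (g (oppow P N.+1 x) x); set q := Rc (g (oppow Q N.+1 x) x).
have p0 : 0 <= p by exact: (mc_ge0 Psa Ppsd x N.+1).
have q0 : 0 <= q by exact: (mc_ge0 Qsa Qpsd x N.+1).
set c0 := g (T x) x.
have h1 : msq c0 <= Rc (g (P x) x).
  have := g_CS (T x) x; rewrite gx1 mulr1.
  by rewrite /P /opcomp hX.
have h2 : msq c0 <= Rc (g (Q x) x).
  have := g_CS x (X x); rewrite gx1 mul1r.
  by rewrite /c0 hTX /Q /opcomp hTX.
have mP := mccarthy Psa Ppsd N gx1.
have mQ := mccarthy Qsa Qpsd N gx1.
have m0 := msq_ge0 c0.
have P10 : 0 <= Rc (g (P x) x) by have := Ppsd x; rewrite lecE => /andP[_].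
have Q10 : 0 <= Rc (g (Q x) x) by have := Qpsd x; rewrite lecE => /andP[_].
have rP : Rc `|c0| ^+ (2 * N.+1) <= p.
  rewrite exprM Rc_norm sqr_sqrtr //; apply: le_trans mP.
  by apply: lerXn2r; rewrite ?nnegrE.
have rQ : Rc `|c0| ^+ (2 * N.+1) <= q.
  rewrite exprM Rc_norm sqr_sqrtr //; apply: le_trans mQ.
  by apply: lerXn2r; rewrite ?nnegrE.
set r := Rc `|c0| ^+ (2 * N.+1).
have r0 : 0 <= r by rewrite exprn_ge0 // Rc_norm sqrtr_ge0.
have -> : r * Num.sqrt 2 = Num.sqrt (r ^+ 2 * 2) by rewrite sqrtrM ?sqr_ge0 // sqrtr_sqr ger0_norm.
have a1 : r ^+ 2 <= p ^+ 2 by apply: lerXn2r; rewrite ?nnegrE.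
have a2 : r ^+ 2 <= q ^+ 2 by apply: lerXn2r; rewrite ?nnegrE.
apply: ler_wsqrtr; lra.
Qed.

End PerOp.

Section Proj.

Lemma ip_real x : ipf x x = (Rc (ipf x x))%:C%C. Proof. exact: f_real ipP x. Qed.
Lemma ipNN u : Rc (ipf (- u) (- u)) = Rc (ipf u u).
Proof. by rewrite (fNl ipZ) (fNr ipZ ipC) opprK. Qed.

Lemma ip_par a b : Rc (ipf (a + b) (a + b)) + Rc (ipf (a - b) (a - b)) =
  2 * Rc (ipf a a) + 2 * Rc (ipf b b).
Proof.
rewrite !(Re_fDD ipD ipC) (fNr ipZ ipC) (fNl ipZ) (fNr ipZ ipC) opprK.
have -> : Rc (- ipf a b) = - Rc (ipf a b) by case: (ipf a b).
ring.
Qed.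

Lemma ip_dbl u : Rc (ipf (u + u) (u + u)) = 4 * Rc (ipf u u).
Proof. rewrite (Re_fDD ipD ipC); ring. Qed.

Lemma subsub (x y p q : V) : (x - p) + (y - q) = (x + y) - (p + q).
Proof. by rewrite opprD addrACA. Qed.

Lemma half_half : (2%:R^-1 + 2%:R^-1 : R[i]) = 1.
Proof. by rewrite -mulr2n -[_ *+ 2]mulr_natl mulfV // pnatr_eq0. Qed.

Lemma le_of_eps (x y : R) : (forall e, 0 < e -> x <= y + e) -> x <= y.
Proof.
move=> h; rewrite leNgt; apply/negP => xy.
have := h ((x - y) / 2%:R); rewrite divr_gt0 ?subr_gt0 // => /(_ isT).
lra.
Qed.

Lemma proj_ex v : exists z, A z = 0 /\ forall w, A w = 0 -> ipf (v - z) w = 0.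
Proof.
pose D : set R := fun t => exists z, A z = 0 /\ t = Rc (ipf (v - z) (v - z)).
have D0 : D (Rc (ipf v v)) by exists 0; rewrite A0 subr0.
have Dlb : has_lbound D.
  by exists 0 => t [z [_ ->]]; apply: (psd_Re ipP).
have hinf : has_inf D by split; [exists (Rc (ipf v v)) | ].
set d := inf D.
have lb z : A z = 0 -> d <= Rc (ipf (v - z) (v - z)).
  by move=> Az; apply: (ge_inf Dlb); exists z.
have d0 : 0 <= d.
  by apply: lb_le_inf; [exists (Rc (ipf v v)) | move=> t [z [_ ->]]; apply: (psd_Re ipP)].
have ap m : exists z, A z = 0 /\ Rc (ipf (v - z) (v - z)) < d + m.+1%:R^-1.
  have ep : 0 < (m.+1%:R : R)^-1 by rewrite invr_gt0 ltr0Sn.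
  have [e [z [Az ->]] He] := inf_adherent ep hinf.
  by exists z.
have [zs hzs] := boolp.choice ap.
have pb m l : Rc (ipf (zs m - zs l) (zs m - zs l)) <= 2 * m.+1%:R^-1 + 2 * l.+1%:R^-1.
  have [Am hm] := hzs m; have [Al hl] := hzs l.
  set mid := 2%:R^-1 *: (zs m + zs l).
  have Amid : A mid = 0 by rewrite /mid AZ AD Am Al addr0 scaler0.
  have hpar := ip_par (v - zs l) (v - zs m).
  have e1 : (v - zs l) - (v - zs m) = zs m - zs l by rewrite opprB addrC addrA subrK.
  have e2 : (v - zs l) + (v - zs m) = (v - mid) + (v - mid).
    by rewrite !subsub; congr (_ - _); rewrite /mid -scalerDl half_half scale1r addrC.
  rewrite e1 e2 ip_dbl in hpar.
  have := lb _ Amid; move: hpar hm hl; set X1 := Rc _; set X2 := Rc _; set X3 := Rc _; set X4 := Rc _; set i1 := (m.+1%:R)^-1; set i2 := (l.+1%:R)^-1. lra.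
have cauchy : forall e : R, 0 < e -> exists N, forall m l, (N <= m)%N -> (N <= l)%N ->
    Num.sqrt (Rc (ipf (zs m - zs l) (zs m - zs l))) < e.
  move=> e e0; have e20 : 0 < e ^+ 2 by rewrite exprn_gt0.
  have q0 : 0 <= 4 / e ^+ 2 by rewrite divr_ge0 // ltW.
  set K := Num.bound (4 / e ^+ 2); exists K => m l Km Kl.
  have hK := archi_boundP q0; rewrite -/K in hK.
  have iK j : (K <= j)%N -> (j.+1%:R : R)^-1 <= (K.+1%:R)^-1.
    by move=> Kj; rewrite lef_pV2 ?posrE ?ltr0Sn // ler_nat ltnS.
  have hK2 : 4 * (K.+1%:R : R)^-1 < e ^+ 2.
    rewrite -(ltr_pM2r (ltr0Sn R K)) divfK ?pnatr_eq0 //.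
    move: hK; rewrite ltr_pdivrMr // => hK; apply: lt_le_trans hK _.
    by rewrite mulrC ler_pM2l // ler_nat.
  have hlt : Rc (ipf (zs m - zs l) (zs m - zs l)) < e ^+ 2.
    have := pb m l; have := iK _ Km; have := iK _ Kl; move: hK2; set X := Rc _; set i1 := (m.+1%:R)^-1; set i2 := (l.+1%:R)^-1; set i3 := (K.+1%:R)^-1; lra.
  rewrite (_ : e = Num.sqrt (e ^+ 2)); last by rewrite sqrtr_sqr ger0_norm // ltW.
  by rewrite ltr_sqrt.
have [l hl] := ip_complete cauchy.
have Al : A l = 0.
  have [MA [MA0 hMA]] := bnd_pos hA.1.
  have h e : 0 < e -> qn ipf (A l) <= MA * e.
    move=> e0; have [N hN] := hl e e0; have := hN N (leqnn N) => hNe.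
    have -> : A l = - A (zs N - l) by rewrite AB (hzs N).1 sub0r opprK.
    rewrite /qn ipNN; apply: le_trans (hMA _) _; rewrite ler_pM2l //; exact: ltW.
  have q0 : qn ipf (A l) = 0.
    apply: le_anti; rewrite qn_ge0 andbT; apply: le_of_eps => e e0.
    rewrite add0r; have := h (e / MA); rewrite divr_gt0 // => /(_ isT).
    by rewrite mulrC divfK // gt_eqF.
  by have := qn0_f ipD ipZ ipC ipP (A l) q0 => /ip_eq0.
have hd : Rc (ipf (v - l) (v - l)) <= d.
  apply: le_of_eps => et et0.
  set K0 := d + 2.
  have K00 : 0 < 2 * K0 + 2 by rewrite /K0; lra.
  set eta := Num.min 1 (et / (2 * K0 + 2)).
  have eta0 : 0 < eta by rewrite lt_min ltr01 divr_gt0.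
  have eta1 : eta <= 1 by rewrite ge_min lexx.
  have eta2 : eta * (2 * K0 + 2) <= et.
    by rewrite -ler_pdivlMr // ge_min lexx orbT.
  have [N1 hN1] := hl eta eta0.
  have e0 : 0 <= 1 / eta by rewrite divr_ge0 // ltW.
  set m := maxn N1 (Num.bound (1 / eta)).
  have hm1 : (m.+1%:R : R)^-1 < eta.
    have hb := archi_boundP e0.
    have H : 1 / eta < m.+1%:R.
      apply: lt_le_trans hb _; rewrite ler_nat.
      exact: leq_trans (leq_maxr _ _) (leqnSn _).
    move: H; rewrite ltr_pdivrMr // -div1r ltr_pdivrMr ?ltr0Sn // mulrC //.
  have [Am hm] := hzs m.
  have hb := hN1 m (leq_maxl _ _).
  have tri := qn_tri ipD ipZ ipC ipP (v - zs m) (zs m - l).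
  rewrite addrA subrK in tri.
  have a2 : qn ipf (v - zs m) ^+ 2 < d + eta.
    by rewrite ip_sqr; apply: lt_trans hm _; rewrite ltrD2l.
  move: tri hb a2; rewrite -ip_sqr.
  have := qn_ge0 ipf (v - zs m); have := qn_ge0 ipf (zs m - l); have := qn_ge0 ipf (v - l).
  rewrite -[Num.sqrt (Rc (ipf (zs m - l) (zs m - l)))]/(qn ipf (zs m - l)).
  set a := qn ipf (v - zs m); set b := qn ipf (zs m - l); set c := qn ipf (v - l).
  move=> c0 b0 a0 tri hb a2.
  have aK : a <= K0 by have := sqr_ge0 (a - 1); rewrite /K0; lra.
  have p1 : a * b <= K0 * eta by apply: ler_pM => //; exact: ltW.
  have p2 : b * b <= eta * eta by apply: ler_pM => //; exact: ltW.
  have p3 : eta * eta <= eta by rewrite ler_piMl // ltW.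
  have p4 : c ^+ 2 <= (a + b) ^+ 2 by apply: lerXn2r; rewrite ?nnegrE // addr_ge0.
  have p5 : K0 * eta * 2 + eta * 2 <= et by move: eta2; lra.
  move: p4; rewrite sqrrD; lra.
exists l; split => // w Aw.
set u := v - l; set c := ipf u w.
set W := Rc (ipf w w).
have W0 : 0 <= W by exact: (psd_Re ipP).
have key t : 0 <= t -> 0 <= - 2 * t * msq c + t ^+ 2 * msq c * W.
  move=> t0; have Az : A (l + (t%:C * c)%C *: w) = 0 by rewrite AD AZ Aw scaler0 addr0.
  have := lb _ Az; rewrite opprD addrA -/u (f_expand ipD ipZ ipC u w t) -/c -/W.
  move: hd; rewrite -/u; lra.
set t := (W + 1)^-1.
have t0 : 0 < t by rewrite invr_gt0; lra.
have W10 : 0 < W + 1 by lra.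
have tW : t * (W + 1) = 1 by rewrite mulVf // gt_eqF.
have m0 := msq_ge0 c.
have hk := key t (ltW t0).
have e : - 2 * t * msq c + t ^+ 2 * msq c * W = - t * msq c * (1 + t).
  have -> : t ^+ 2 * msq c * W = t * msq c * (t * (W + 1)) - t ^+ 2 * msq c by ring.
  rewrite tW; ring.
rewrite e in hk.
have mc : msq c = 0.
  apply: le_anti; rewrite m0 andbT.
  have : 0 < t * (1 + t) by rewrite mulr_gt0 //; lra.
  move: hk; set z := msq c => hk tt.
  nra.
clear key hk e m0; clearbody c; move: mc; rewrite /msq; case: c => a b /= hab.
have ha : a ^+ 2 = 0 by apply: le_anti; rewrite sqr_ge0 andbT; have := sqr_ge0 b; lra.
have hb : b ^+ 2 = 0 by apply: le_anti; rewrite sqr_ge0 andbT; have := sqr_ge0 a; lra.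
by move: ha hb => /eqP; rewrite sqrf_eq0 => /eqP -> /eqP; rewrite sqrf_eq0 => /eqP ->.
Qed.



Lemma sharp_spec T : BA HS A T -> forall x y, g (sharpA HS A T x) y = g x (T y).
Proof.
case=> bT [S' [bS hTS]].
have hTS' : forall x y, g (T x) y = g x (S' y) by exact: hTS.
have hS := adj_swap hTS'.
have ex : exists Xf, reduced_sol HS A T Xf.
  have [pz hpz] := boolp.choice (fun x => proj_ex (S' x)).
  exists (fun x => S' x - pz x); split.
    move=> x y; rewrite /inner AB (hpz x).1 subr0; exact: hS.
  by move=> x z Az; exact: (hpz x).2 z Az.
have := @epsilon_spec _ (inhabits (fun _ : V => 0 : V)) (reduced_sol HS A T) ex.
by case=> h _ x y; exact: h x y.
Qed.

End Proj.

End Main.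

Unset Implicit Arguments. Set Strict Implicit. Set Printing Implicit Defensive.

Lemma Rc_add (R : realType) (a b : R[i]) : Rc (a + b) = Rc a + Rc b.
Proof. by case: a; case: b. Qed.

Lemma Rc_sum (R : realType) k (F : 'I_k -> R[i]) : Rc (\sum_i F i) = \sum_i Rc (F i).
Proof. exact: (big_morph _ (@Rc_add R) (erefl _)). Qed.

Lemma Rc_le (R : realType) (a b : R[i]) : a <= b -> Rc a <= Rc b.
Proof. by rewrite lecE => /andP[_]. Qed.

Lemma Rc_abs_ge0 (R : realType) (a : R[i]) : 0 <= Rc `|a|.
Proof. by rewrite Rc_norm sqrtr_ge0. Qed.

Lemma om_ge0 (R : realType) (V : lmodType R[i]) (HS : hilbert V) A M : 0 <= omegaA HS A M.
Proof.
rewrite /omegaA; set E := (X in sup X).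
have [hs|nhs] := pselect (has_sup E); last by rewrite sup_out.
case: (hs) => [[e Ee] _]; apply: le_trans (sup_upper_bound hs Ee).
by case: Ee => x [_ ->]; apply: Rc_abs_ge0.
Qed.

Theorem theorem3p13 (R : realType) (V : lmodType R[i]) (HS : hilbert V)
  (A : V -> V) (hA : positive_op HS A) (hA0 : exists x, A x <> 0)
  (k : nat) (hk : (1 <= k)%N) (S : 'I_k -> V -> V)
  (hS : forall i, BA HS A (S i)) (n : nat) (hn : (1 <= n)%N) :
  omegaA HS A (opsum S) ^+ (2 * n)
  <= (k ^ (2 * n - 1))%:R / Num.sqrt 2 *
     \sum_(i < k) omegaA HS A
        (opadd (oppow (opcomp (sharpA HS A (S i)) (S i)) n)
               (opscale 'i%C (oppow (opcomp (S i) (sharpA HS A (S i))) n))).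
Proof.
case: n hn => [//|N] _.
set RHS := (X in _ <= X).
have s20 : 0 < Num.sqrt 2 :> R by rewrite sqrtr_gt0.
have RHS0 : 0 <= RHS.
  apply: mulr_ge0; first by apply: divr_ge0; [exact: ler0n | exact: ltW].
  by apply: sumr_ge0 => i _; exact: om_ge0.
have em : (2 * N.+1 = (2 * N).+1.+1)%N by rewrite mulnS.
have em1 : (2 * N.+1 - 1 = (2 * N).+1)%N by rewrite em subn1.
have ub : forall x, qn (g HS A) x = 1 -> Rc `|g HS A (opsum S x) x| ^+ (2 * N.+1) <= RHS.
  move=> x x1.
  set r := fun i => Rc `|g HS A (S i x) x|.
  have r0 i : 0 <= r i by apply: Rc_abs_ge0.
  have h1 : Rc `|g HS A (opsum S x) x| <= \sum_i r i.
    rewrite /opsum (big_morph (fun u => g HS A u x) (fun a b => gD hA a b x) (f0l (gZ hA) x)).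
    by rewrite -Rc_sum; apply: Rc_le; apply: ler_norm_sum.
  have h2 : Rc `|g HS A (opsum S x) x| ^+ (2 * N.+1) <= (\sum_i r i) ^+ (2 * N.+1).
    by apply: lerXn2r; rewrite ?nnegrE ?Rc_abs_ge0 ?sumr_ge0.
  apply: le_trans h2 _.
  rewrite em; apply: le_trans (power_mean _ r0) _.
  rewrite /RHS em1 -mulrA; apply: ler_wpM2l; first exact: ler0n.
  rewrite mulr_sumr; apply: ler_sum => i _.
  rewrite mulrC ler_pdivlMr // -em.
  exact: (per_op hA (hS i) (sharp_spec hA (hS i)) N x1).
have w0 := @om_ge0 _ _ HS A (opsum S).
rewrite /omegaA in w0 *; set E := (X in sup X) in w0 *.
have [hs|nhs] := pselect (has_sup E); last by rewrite sup_out // expr0n.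
set w := sup E in w0 *.
rewrite em; set m := (2 * N).+1.
rewrite leNgt; apply/negP => lt.
have wpos : 0 < w.
  rewrite lt_def w0 andbT; apply/eqP => wz; move: lt; rewrite wz expr0n /=; lra.
set dd := w ^+ m.+1 - RHS.
have dd0 : 0 < dd by rewrite /dd subr_gt0.
set K := m.+1%:R * w ^+ m.
have K0 : 0 < K by rewrite /K mulr_gt0 ?ltr0Sn // exprn_gt0.
set eps := dd / K.
have eps0 : 0 < eps by rewrite divr_gt0.
have [e Ee He] := sup_adherent eps0 hs.
have ew : e <= w := sup_upper_bound hs Ee.
rewrite -/w in He.
case: Ee => x [x1 ex].
have e0 : 0 <= e by rewrite ex; apply: Rc_abs_ge0.
have he : e ^+ m.+1 <= RHS by rewrite ex -em; exact: ub x x1.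
have pd := pow_diff m e0 ew.
have Keps : K * eps = dd by rewrite /eps mulrC divfK // gt_eqF.
have h3 : K * (w - e) < K * eps by rewrite ltr_pM2l //; lra.
rewrite -/K in pd.
move: Keps h3 pd he; rewrite /dd; lra.
Qed.
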